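(* Let $\Omega_n=\dfrac{\pi^{n/2}}{\Gamma\left(\frac n2+1\right)}$ for $n\in\mathbb{N}_0$. Then \[ \left(1+\frac1n\right)^{\frac12-\frac1{4n}+\frac1{8n^2}}<\frac{\Omega_n^2}{\Omega_{n-1}\Omega_{n+1}} \] for every integer $n\ge5$, and \[ \frac{\Omega_n^2}{\Omega_{n-1}\Omega_{n+1}}<\left(1+\frac1n\right)^{\frac12-\frac1{4n}+\frac1{8n^2}+\frac1{48n^3}} \] for every integer $n\ge1$.
   Context: $\Omega_n$ is the volume of the unit ball in $\mathbb{R}^n$ ($\Omega_0=1$); $\Gamma$ is Euler's gamma function. *)

(* Defs.v *)
From Stdlib Require Import Reals.
From Coquelicot Require Import Coquelicot.
Open Scope R_scope.

Definition Gamma (x : R) : R :=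
  RInt_gen (fun t => Rpower t (x - 1) * exp (- t))
           (at_right 0) (Rbar_locally p_infty).

(* Volume of the unit ball in R^n: Omega n = pi^(n/2) / Gamma(n/2 + 1). *)
Definition Omega (n : nat) : R :=
  Rpower PI (INR n / 2) / Gamma (INR n / 2 + 1).

(* Main.v *)
Require Import Defs.
From Stdlib Require Import Reals.
From Coquelicot Require Import Coquelicot.
From Stdlib Require Import Lra Lia Psatz Classical List.
Import ListNotations.
Open Scope R_scope.

Lemma nonneg_mvt (f df : R -> R) (z : R) :
  0 <= z ->
  (forall x, 0 <= x <= z -> is_derive f x (df x)) ->
  (forall x, 0 <= x <= z -> 0 <= df x) -> f 0 <= f z.
Proof.
  intros Hz Hd Hpos.
  destruct (MVT_gen f 0 z df) as [c [Hc Heq]].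
  - intros x Hx. rewrite Rmin_left in Hx by lra. rewrite Rmax_right in Hx by lra.
    apply Hd; lra.
  - intros x Hx. rewrite Rmin_left in Hx by lra. rewrite Rmax_right in Hx by lra.
    apply continuity_pt_filterlim. apply (ex_derive_continuous f). eexists; apply Hd; lra.
  - rewrite Rmin_left in Hc by lra. rewrite Rmax_right in Hc by lra.
    assert (0 <= df c) by (apply Hpos; lra). nra.
Qed.

Definition lo3 (z : R) := 2 * (z + z^3/3 + z^5/5).
Definition hi3 (z : R) := lo3 z + 2 * z^7 / (7 * (1 - z^2)).

Lemma artanh_lo (z : R) : 0 <= z < 1 -> lo3 z <= ln (1+z) - ln (1-z).
Proof.
  intros Hz.
  set (f := fun x => ln (1+x) - ln (1-x) - lo3 x).
  assert (H : f 0 <= f z).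
  { apply (nonneg_mvt f (fun x => 2 * x^6 / (1 - x^2))). lra.
    - intros x Hx. unfold f, lo3. auto_derive; [repeat split; nra | field; repeat split; nra].
    - intros x Hx. apply Rmult_le_pos. nra. apply Rlt_le, Rinv_0_lt_compat. nra. }
  unfold f, lo3 in H. rewrite Rplus_0_r, Rminus_0_r, ln_1 in H. unfold lo3. rewrite (pow_i 3), (pow_i 5) in H by lia. lra.
Qed.

Lemma artanh_hi (z : R) : 0 <= z < 1 -> ln (1+z) - ln (1-z) <= hi3 z.
Proof.
  intros Hz.
  set (f := fun x => hi3 x - (ln (1+x) - ln (1-x))).
  assert (H : f 0 <= f z).
  { apply (nonneg_mvt f (fun x => 4 * x^8 / (7 * (1 - x^2)^2))). lra.
    - intros x Hx. unfold f, hi3, lo3. auto_derive; [repeat split; nra | field; repeat split; nra].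
    - intros x Hx. apply Rmult_le_pos. nra. apply Rlt_le, Rinv_0_lt_compat. assert (0 < 1 - x^2) by nra. apply Rmult_lt_0_compat; [lra | apply pow_lt; lra]. }
  unfold f, hi3, lo3 in H. rewrite Rplus_0_r, Rminus_0_r, ln_1 in H.
  rewrite (pow_i 3), (pow_i 5), (pow_i 7), (pow_i 2) in H by lia. unfold hi3, lo3. lra.
Qed.

Fixpoint hor (l : list R) (u : R) : R :=
  match l with nil => 0 | c :: t => c + u * hor t u end.

Lemma hor_nonneg (l : list R) (u : R) :
  Forall (fun c => 0 <= c) l -> 0 <= u -> 0 <= hor l u.
Proof.
  intros H Hu; induction H as [|c t Hc Ht IH]; simpl. lra.
  apply Rplus_le_le_0_compat; auto. apply Rmult_le_pos; auto.
Qed.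

Lemma hor_pos (c : R) (l : list R) (u : R) :
  0 < c -> Forall (fun c => 0 <= c) l -> 0 <= u -> 0 < hor (c :: l) u.
Proof.
  intros Hc H Hu; simpl. assert (0 <= u * hor l u) by (apply Rmult_le_pos; auto using hor_nonneg). lra.
Qed.

Definition LO (x : R) := 2 * (1/(2*x+1) + 1/(3*(2*x+1)^3) + 1/(5*(2*x+1)^5)).
Definition HI (x : R) := LO x + 2 / (7 * (2*x+1)^5 * (4*x*(x+1))).
Definition pl (x : R) := 1/2 - 1/(4*x) + 1/(8*x^2).
Definition pu (x : R) := 1/2 - 1/(4*x) + 1/(8*x^2) + 1/(48*x^3).

Definition Sl : list R := [26185968398395855125; 355374022580606103450; 843999468955619441715; 1010456719515251474486; 769692904021305719308; 413165188742342913244; 165222057542758350676; 50882398971107649408; 12315676792693688592; 2370731918078601728; 364912852764155776; 44905397434548736; 4392208468321792; 337252546808832; 19901314900992; 871550910464; 26691162112; 510361600; 4587520].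
Definition Su : list R := [84525956722872; 649803597154173; 2330702524151883; 5180453649291249; 7992290419741383; 9083185892377710; 7875160495573250; 5320931655121600; 2836763347602920; 1200309898015200; 403138573518912; 106878189043968; 22095590308864; 3487827450368; 406017419776; 32849240064; 1649436672; 38707200].

Lemma El_pos (x : R) : 5 <= x ->
  0 < LO (x+1) - pl x * HI x - (1 - pl (x+2)) * HI (x+2).
Proof.
  intros Hx.
  assert (E : LO (x+1) - pl x * HI x - (1 - pl (x+2)) * HI (x+2) =
    hor Sl (x-5) / (840 * ((2*x+3)^5 * x^3 * (x+1) * (2*x+1)^5 * (x+2)^3 * (x+3) * (2*x+5)^5))).
  { unfold HI, LO, pl, Sl; cbn [hor]; field. repeat split; lra. }
  rewrite E. apply Rdiv_lt_0_compat.
  - unfold Sl. apply hor_pos. lra. repeat constructor; lra. lra.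
  - repeat apply Rmult_lt_0_compat; try apply pow_lt; lra.
Qed.

Lemma Eu_neg (x : R) : 1 <= x ->
  HI (x+1) - pu x * LO x - (1 - pu (x+2)) * LO (x+2) < 0.
Proof.
  intros Hx.
  assert (E : HI (x+1) - pu x * LO x - (1 - pu (x+2)) * LO (x+2) =
    - (hor Su (x-1) / (1260 * ((2*x+3)^5 * (x+1) * (x+2) * x^3 * (2*x+1)^5 * (x+2)^3 * (2*x+5)^5)))).
  { unfold HI, LO, pu, Su; cbn [hor]; field. repeat split; lra. }
  rewrite E. apply Ropp_lt_gt_0_contravar. apply Rdiv_lt_0_compat.
  - unfold Su. apply hor_pos. lra. repeat constructor; lra. lra.
  - repeat apply Rmult_lt_0_compat; try apply pow_lt; lra.
Qed.

Definition gf (s t : R) : R := Rpower t s * exp (- t).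

Lemma gf_pos s t : 0 < gf s t.
Proof. unfold gf, Rpower. apply Rmult_lt_0_compat; apply exp_pos. Qed.

Lemma gf_cont s t : 0 < t -> continuous (gf s) t.
Proof.
  intros Ht. apply (ex_derive_continuous (gf s)). unfold gf, Rpower.
  auto_derive. lra.
Qed.

Lemma ex_gf s a b : 0 < a -> 0 < b -> ex_RInt (gf s) a b.
Proof.
  intros Ha Hb. apply (@ex_RInt_continuous R_CompleteNormedModule). intros z Hz. apply gf_cont.
  assert (0 < Rmin a b) by (apply Rmin_glb_lt; lra). lra.
Qed.

Lemma exp_pow_nat (x : R) (n : nat) : exp x ^ n = exp (INR n * x).
Proof.
  induction n as [|n IH]. simpl. rewrite Rmult_0_l, exp_0. reflexivity.
  rewrite S_INR, <- tech_pow_Rmult, IH, <- exp_plus. f_equal. ring.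
Qed.

Lemma gf_bound s : 0 <= s -> exists M, 0 < M /\ forall t, 0 < t -> gf s t <= M / (1+t)^2.
Proof.
  intros Hs.
  destruct (INR_unbounded (s+2)) as [m Hm].
  assert (Hm1 : 1 <= INR m) by lra.
  exists (INR m ^ m). split. apply pow_lt; lra.
  intros t Ht.
  set (P := (1+t)^m).
  assert (HK : Rpower t s <= Rpower (1+t) (INR m - 2)).
  { apply Rle_trans with (Rpower (1+t) s).
    apply Rle_Rpower_l; lra. apply Rle_Rpower; lra. }
  assert (HKQ : Rpower (1+t) (INR m - 2) * (1+t)^2 = P).
  { unfold P. rewrite <- (Rpower_pow 2) by lra. rewrite <- Rpower_plus.
    rewrite <- Rpower_pow by lra. f_equal. simpl. ring. }
  assert (Hexp : P <= INR m ^ m * exp t).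
  { assert (Ee : exp t = exp (t / INR m) ^ m) by (rewrite exp_pow_nat; f_equal; field; lra).
    rewrite Ee, <- Rpow_mult_distr.
    unfold P. apply pow_incr. split. lra.
    assert (H1 := exp_ineq1_le (t / INR m)).
    assert (INR m * (1 + t / INR m) = INR m + t) by (field; lra).
    nra. }
  unfold gf. rewrite exp_Ropp.
  assert (0 < exp t) by apply exp_pos.
  assert (0 < (1+t)^2) by (apply pow_lt; lra).
  assert (0 < Rpower t s) by (unfold Rpower; apply exp_pos).
  apply Rmult_le_reg_r with ((1+t)^2 * exp t). nra.
  replace (INR m ^ m / (1 + t) ^ 2 * ((1 + t) ^ 2 * exp t)) with (INR m ^ m * exp t) by (field; lra).
  replace (Rpower t s * / exp t * ((1 + t) ^ 2 * exp t)) with (Rpower t s * (1+t)^2) by (field; lra).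
  nra.
Qed.

Lemma int_bound s : 0 <= s -> exists M, forall a b, 0 < a <= b -> RInt (gf s) a b <= M.
Proof.
  intros Hs. destruct (gf_bound s Hs) as [M [HM Hb]].
  exists M. intros a b Hab.
  set (g := fun t => M / (1+t)^2).
  set (Fm := fun t => - M / (1+t)).
  assert (Hg : is_RInt g a b (minus (Fm b) (Fm a))).
  { apply (@is_RInt_derive R_CompleteNormedModule Fm g).
    - intros x Hx. rewrite Rmin_left in Hx by lra. rewrite Rmax_right in Hx by lra.
      unfold g, Fm. auto_derive. lra. field. lra.
    - intros x Hx. rewrite Rmin_left in Hx by lra. rewrite Rmax_right in Hx by lra.
      apply (ex_derive_continuous g). unfold g. auto_derive. rewrite Rmult_1_r; apply Rgt_not_eq; apply Rmult_lt_0_compat; lra. }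
  apply Rle_trans with (RInt g a b).
  - apply RInt_le. lra. apply ex_gf; lra. eexists; exact Hg.
    intros x Hx. unfold g. apply Hb. lra.
  - rewrite (is_RInt_unique _ _ _ _ Hg). unfold Fm, minus, plus, opp; simpl.
    assert (0 < M / (1+b)) by (apply Rdiv_lt_0_compat; lra).
    assert (M / (1+a) <= M).
    { unfold Rdiv. rewrite <- (Rmult_1_r M) at 2. apply Rmult_le_compat_l. lra.
      rewrite <- Rinv_1. apply Rinv_le_contravar; lra. }
    unfold Rdiv in *. lra.
Qed.

Lemma RInt_nonneg s a b : 0 < a <= b -> 0 <= RInt (gf s) a b.
Proof.
  intros H. apply RInt_ge_0. lra. apply ex_gf; lra. intros; apply Rlt_le, gf_pos.
Qed.

Lemma RInt_mono s a' a b b' : 0 < a' <= a -> a <= b -> b <= b' ->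
  RInt (gf s) a b <= RInt (gf s) a' b'.
Proof.
  intros H1 H2 H3.
  rewrite <- (RInt_Chasles (gf s) a' a b') by (apply ex_gf; lra).
  rewrite <- (RInt_Chasles (gf s) a b b') by (apply ex_gf; lra).
  unfold plus; simpl.
  assert (0 <= RInt (gf s) a' a) by (apply RInt_nonneg; lra).
  assert (0 <= RInt (gf s) b b') by (apply RInt_nonneg; lra).
  lra.
Qed.

Lemma ball_R (x e y : R) : ball x e y <-> Rabs (y - x) < e.
Proof. unfold ball; simpl; unfold AbsRing_ball, abs, minus, plus, opp; simpl. tauto. Qed.

Lemma gamma_char s : 0 <= s -> exists G,
  is_RInt_gen (gf s) (at_right 0) (Rbar_locally p_infty) G /\
  (forall a b, 0 < a <= b -> RInt (gf s) a b <= G) /\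
  (forall B, (forall a b, 0 < a <= b -> RInt (gf s) a b <= B) -> G <= B).
Proof.
  intros Hs.
  set (E := fun v => exists a b, 0 < a <= b /\ v = RInt (gf s) a b).
  destruct (completeness E) as [G [HG1 HG2]].
  { destruct (int_bound s Hs) as [M HM]. exists M. intros v [a [b [Hab ->]]]. auto. }
  { exists (RInt (gf s) 1 1). exists 1, 1. split. lra. reflexivity. }
  assert (Hup : forall a b, 0 < a <= b -> RInt (gf s) a b <= G).
  { intros a b Hab. apply HG1. exists a, b. auto. }
  exists G. split; [|split].
  - intros P [eps HP].
      destruct (classic (exists a b, 0 < a <= b /\ G - eps < RInt (gf s) a b)) as [Hex|Hnex].
      * destruct Hex as [a0 [b0 [Hab0 Hlt]]].
        apply Filter_prod with (Q := fun a => 0 < a < a0) (R := fun b => b0 < b).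
        -- exists (mkposreal a0 (proj1 Hab0)). intros y Hb Hy. apply ball_R in Hb. simpl in Hb.
           split. exact Hy. apply Rabs_lt_between' in Hb. lra.
        -- exists b0. auto.
        -- intros a b Ha Hb. simpl. exists (RInt (gf s) a b). split.
           apply (@RInt_correct R_CompleteNormedModule), ex_gf; lra.
           apply HP. apply ball_R.
           assert (RInt (gf s) a0 b0 <= RInt (gf s) a b) by (apply RInt_mono; lra).
           assert (RInt (gf s) a b <= G) by (apply Hup; lra).
           apply Rabs_lt_between'. split; lra.
      * exfalso.
        assert (G <= G - eps).
        { apply HG2. intros v [a [b [Hab ->]]].
          apply Rnot_lt_le. intros Hc. apply Hnex. exists a, b. auto. }
        destruct eps; simpl in *; lra.
  - exact Hup.
  - intros B HB. apply HG2. intros v [a [b [Hab ->]]]. auto.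
Qed.

Lemma exp_le x y : x <= y -> exp x <= exp y.
Proof. intros H. destruct (Rle_lt_or_eq_dec x y H) as [H1|H1]. apply Rlt_le, exp_increasing, H1. rewrite H1; lra. Qed.

Lemma Gamma_spec y : 1 <= y ->
  is_RInt_gen (gf (y-1)) (at_right 0) (Rbar_locally p_infty) (Gamma y) /\
  (forall a b, 0 < a <= b -> RInt (gf (y-1)) a b <= Gamma y) /\
  (forall B, (forall a b, 0 < a <= b -> RInt (gf (y-1)) a b <= B) -> Gamma y <= B).
Proof.
  intros Hy. destruct (gamma_char (y-1)) as [G [H1 [H2 H3]]]. lra.
  assert (E : Gamma y = G).
  { unfold Gamma. change (fun t => Rpower t (y - 1) * exp (- t)) with (gf (y-1)).
    apply is_RInt_gen_unique; auto. }
  rewrite E. auto.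
Qed.

Lemma Gamma_pos y : 1 <= y -> 0 < Gamma y.
Proof.
  intros Hy. destruct (Gamma_spec y Hy) as [_ [H2 _]].
  apply Rlt_le_trans with (RInt (gf (y-1)) 1 2); [|apply H2; lra].
  apply Rle_lt_trans with (RInt (fun _ => 0) 1 2).
  { rewrite RInt_const. unfold scal; simpl; unfold mult; simpl. lra. }
  apply RInt_lt. lra.
  - intros x Hx. apply gf_cont. lra.
  - intros x Hx. apply continuous_const.
  - intros x Hx. apply gf_pos.
Qed.

Lemma Gamma_rec y : 1 <= y -> Gamma (y+1) = y * Gamma y.
Proof.
  intros Hy.
  destruct (Gamma_spec y Hy) as [Hg1 _].
  destruct (Gamma_spec (y+1)) as [Hg2 _]. lra.
  replace (y+1-1) with y in Hg2 by ring.
  set (F := gf y).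
  set (h := fun t => minus (scal y (gf (y-1) t)) (gf y t)).
  assert (Hder : forall t, 0 < t -> is_derive F t (h t)).
  { intros t Ht. unfold F, h, gf, Rpower, minus, plus, opp, scal; simpl; unfold mult; simpl.
    auto_derive; [timeout 5 lra|..].
    assert (Ee : exp ((y-1) * ln t) * t = exp (y * ln t)).
    { rewrite <- (exp_ln t) at 2 by lra. rewrite <- exp_plus. f_equal. ring. }
    rewrite <- Ee. field. lra. }
  assert (Hz : is_RInt_gen h (at_right 0) (Rbar_locally p_infty) 0).
  { destruct (gf_bound y) as [M [HM HMb]]. lra.
    intros P [eps HP].
    set (e2 := eps / 2).
    assert (He2 : 0 < e2) by (unfold e2; destruct eps; simpl; lra).
    apply Filter_prod with (Q := fun a => 0 < a < Rmin 1 e2) (R := fun b => Rmax 1 (M / e2) < b).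
    - assert (Hm : 0 < Rmin 1 e2) by (apply Rmin_glb_lt; lra).
      exists (mkposreal _ Hm). intros z Hb Hz. apply ball_R in Hb. simpl in Hb.
      split. exact Hz. apply Rabs_lt_between' in Hb. lra.
    - exists (Rmax 1 (M / e2)). auto.
    - intros a b [Ha0 Ha] Hb. simpl.
      assert (Ha1 : a < 1) by (apply Rlt_le_trans with (1 := Ha), Rmin_l).
      assert (Ha2 : a < e2) by (apply Rlt_le_trans with (1 := Ha), Rmin_r).
      assert (Hb1 : 1 < b) by (apply Rle_lt_trans with (2 := Hb), Rmax_l).
      assert (Hb2 : M / e2 < b) by (apply Rle_lt_trans with (2 := Hb), Rmax_r).
      exists (minus (F b) (F a)). split.
      + apply (@is_RInt_derive R_CompleteNormedModule F h).
        * intros x Hx. apply Hder. assert (Rmin a b <= x) by lra.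
          assert (0 < Rmin a b) by (apply Rmin_glb_lt; lra). lra.
        * intros x Hx. assert (0 < Rmin a b) by (apply Rmin_glb_lt; lra).
          apply (ex_derive_continuous h). unfold h, gf, Rpower, minus, plus, opp, scal; simpl; unfold mult; simpl.
          auto_derive; [timeout 5 lra|..].
      + apply HP. apply ball_R. unfold minus, plus, opp; simpl.
        assert (HFa : 0 < F a < e2).
        { split. apply gf_pos. unfold F, gf.
          assert (Rpower a y <= a).
          { unfold Rpower. rewrite <- (exp_ln a) at 2 by lra. apply exp_le.
            assert (ln a < 0) by (rewrite <- ln_1; apply ln_increasing; lra). timeout 5 nra. }
          assert (exp (-a) < 1) by (rewrite <- exp_0; apply exp_increasing; lra).
          assert (0 < Rpower a y) by (unfold Rpower; apply exp_pos).
          apply Rle_lt_trans with (Rpower a y * 1). apply Rmult_le_compat_l; lra. lra. }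
        assert (HFb : 0 < F b < e2).
        { split. apply gf_pos. apply Rle_lt_trans with (M / (1+b)^2). apply HMb; lra.
          apply Rle_lt_trans with (M / b).
          - apply Rmult_le_compat_l. lra. apply Rinv_le_contravar. lra. timeout 5 nra.
          - apply Rmult_lt_reg_r with (b / e2). apply Rdiv_lt_0_compat; lra.
            replace (M / b * (b / e2)) with (M / e2) by (field; lra).
            replace (e2 * (b / e2)) with b by (field; lra). lra. }
        unfold e2 in *. apply Rabs_lt_between'. lra. }
  assert (Hc : is_RInt_gen h (at_right 0) (Rbar_locally p_infty)
                 (minus (scal y (Gamma y)) (Gamma (y+1)))).
  { pose proof (@is_RInt_gen_scal R_NormedModule (at_right 0) (Rbar_locally p_infty) _ _ (gf (y-1)) y (Gamma y) Hg1) as S1.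
    exact (@is_RInt_gen_minus R_NormedModule (at_right 0) (Rbar_locally p_infty) _ _ _ (gf y) _ _ S1 Hg2). }
  assert (E1 := is_RInt_gen_unique _ _ Hz).
  assert (E2 := is_RInt_gen_unique _ _ Hc).
  rewrite E1 in E2.
  change (minus (scal y (Gamma y)) (Gamma (y+1))) with (y * Gamma y - Gamma (y+1)) in E2.
  lra.
Qed.

Lemma Gamma_logconv y : 3/2 <= y -> Gamma y ^ 2 <= Gamma (y - 1/2) * Gamma (y + 1/2).
Proof.
  intros Hy.
  destruct (Gamma_spec y) as [_ [_ H3]]. lra.
  destruct (Gamma_spec (y-1/2)) as [HA _]. lra.
  destruct (Gamma_spec (y+1/2)) as [HB _]. lra.
  destruct (Gamma_spec (y-1/2)) as [_ [HA2 _]]. lra.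
  destruct (Gamma_spec (y+1/2)) as [_ [HB2 _]]. lra.
  assert (PG := Gamma_pos y ltac:(lra)).
  assert (PA := Gamma_pos (y-1/2) ltac:(lra)).
  assert (PB := Gamma_pos (y+1/2) ltac:(lra)).
  set (G := Gamma y) in *. set (A := Gamma (y-1/2)) in *. set (B := Gamma (y+1/2)) in *.
  set (lam := G / A).
  assert (Hlam : 0 < lam) by (apply Rdiv_lt_0_compat; lra).
  set (k1 := lam / 2). set (k2 := / (2 * lam)).
  set (g1 := gf (y - 1/2 - 1)). set (g2 := gf (y + 1/2 - 1)).
  assert (Hle : G <= k1 * A + k2 * B).
  { apply H3. intros a b Hab.
    set (c := fun t => plus (scal k1 (g1 t)) (scal k2 (g2 t))).
    assert (Hc : is_RInt c a b (plus (scal k1 (RInt g1 a b)) (scal k2 (RInt g2 a b)))).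
    { apply (@is_RInt_plus R_NormedModule); apply (@is_RInt_scal R_NormedModule);
        apply (@RInt_correct R_CompleteNormedModule), ex_gf; lra. }
    apply Rle_trans with (RInt c a b).
    - apply RInt_le. lra. apply ex_gf; lra. eexists; exact Hc.
      intros t Ht. unfold c, g1, g2, gf, plus, scal; simpl; unfold mult; simpl.
      assert (0 < exp (-t)) by apply exp_pos.
      set (w := Rpower t (y-1)). set (u := Rpower t (y - 1/2 - 1)). set (v := Rpower t (y + 1/2 - 1)).
      assert (Huv : u * v = w * w).
      { unfold u, v, w. rewrite <- !Rpower_plus. f_equal. ring. }
      assert (0 < u) by (unfold u, Rpower; apply exp_pos).
      assert (0 < v) by (unfold v, Rpower; apply exp_pos).
      assert (Hw : w <= k1 * u + k2 * v).
      { unfold k1, k2.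
        assert (0 <= lam * lam * u - 2 * lam * w + v).
        { apply Rmult_le_reg_l with u. lra. rewrite Rmult_0_r.
          replace (u * (lam * lam * u - 2 * lam * w + v)) with ((lam * u - w)^2)
            by (transitivity (lam^2*u^2 - 2*lam*u*w + u*v); [rewrite Huv; ring | ring]).
          apply pow2_ge_0. }
        apply Rmult_le_reg_l with (2 * lam). lra.
        replace (2 * lam * (lam / 2 * u + / (2 * lam) * v)) with (lam * lam * u + v) by (field; lra).
        lra. }
      replace (k1 * (u * exp (- t)) + k2 * (v * exp (- t))) with ((k1 * u + k2 * v) * exp (-t)) by ring.
      apply Rmult_le_compat_r; lra.
    - rewrite (is_RInt_unique _ _ _ _ Hc). unfold plus, scal; simpl; unfold mult; simpl.
      assert (RInt g1 a b <= A) by (apply HA2; lra).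
      assert (RInt g2 a b <= B) by (apply HB2; lra).
      assert (0 < k1) by (unfold k1; lra).
      assert (0 < k2) by (unfold k2; apply Rinv_0_lt_compat; lra).
      apply Rplus_le_compat; apply Rmult_le_compat_l; lra. }
  unfold k1, k2, lam in Hle.
  replace (G / A / 2 * A + / (2 * (G / A)) * B) with (G / 2 + A * B / (2 * G)) in Hle by (field; lra).
  apply Rmult_le_reg_r with (/ G). apply Rinv_0_lt_compat; lra.
  replace (G ^ 2 * / G) with G by (field; lra).
  replace (A * B * / G) with (2 * (A * B / (2 * G))) by (field; lra). lra.
Qed.

Lemma ln_le' x y : 0 < x -> x <= y -> ln x <= ln y.
Proof. intros Hx H. destruct (Rle_lt_or_eq_dec x y H) as [H1|H1]. apply Rlt_le, ln_increasing; auto. rewrite H1; lra. Qed.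

Lemma ln1p_le u : 0 < u -> ln (1 + u) <= u.
Proof. intros Hu. rewrite <- (ln_exp u) at 2. apply ln_le'. lra. apply exp_ineq1_le. Qed.

Lemma L_bounds x : 0 < x -> LO x <= ln (1 + 1/x) <= HI x.
Proof.
  intros Hx. set (z := 1 / (2*x+1)).
  assert (Hz : 0 <= z < 1).
  { unfold z. split. apply Rlt_le, Rdiv_lt_0_compat; lra.
    apply Rmult_lt_reg_r with (2*x+1). lra. unfold Rdiv. rewrite Rmult_assoc, Rinv_l by lra. lra. }
  assert (E : ln (1 + 1/x) = ln (1+z) - ln (1-z)).
  { rewrite <- ln_div by lra. f_equal. unfold z. field. lra. }
  assert (E1 : lo3 z = LO x) by (unfold lo3, LO, z; field; repeat split; lra).
  assert (E2 : hi3 z = HI x). { unfold hi3, lo3, HI, LO, z. field. repeat split; try lra. apply Rgt_not_eq. nra. }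
  rewrite E, <- E1, <- E2. split. apply artanh_lo; auto. apply artanh_hi; auto.
Qed.

Definition Rat (x : R) := Gamma (x + 1/2) * Gamma (x + 3/2) / Gamma (x + 1) ^ 2.

Lemma Gamma_ext a b : a = b -> Gamma a = Gamma b.
Proof. intros ->; reflexivity. Qed.

Lemma Rat_pos x : 1/2 <= x -> 0 < Rat x.
Proof.
  intros Hx. unfold Rat. apply Rdiv_lt_0_compat. apply Rmult_lt_0_compat; apply Gamma_pos; lra.
  apply pow_lt, Gamma_pos; lra.
Qed.

Lemma Rat_ge1 x : 1/2 <= x -> 1 <= Rat x.
Proof.
  intros Hx. unfold Rat.
  assert (H := Gamma_logconv (x+1) ltac:(lra)).
  rewrite (Gamma_ext (x+1-1/2) (x+1/2)) in H by field.
  rewrite (Gamma_ext (x+1+1/2) (x+3/2)) in H by field.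
  assert (0 < Gamma (x+1) ^ 2) by (apply pow_lt, Gamma_pos; lra).
  apply Rmult_le_reg_r with (Gamma (x+1) ^ 2). auto.
  unfold Rdiv. rewrite Rmult_assoc, Rinv_l by lra. lra.
Qed.

Lemma Rat_mul x : 1/2 <= x -> Rat x * Rat (x + 1/2) = (x+1)/(x+1/2).
Proof.
  intros Hx. unfold Rat.
  rewrite (Gamma_ext (x+1/2+1/2) (x+1)) by field.
  rewrite (Gamma_ext (x+1/2+3/2) (x+1+1)) by field.
  rewrite (Gamma_rec (x+1)) by lra.
  rewrite (Gamma_ext (x+3/2) (x+1/2+1)) by field.
  rewrite (Gamma_rec (x+1/2)) by lra.
  assert (0 < Gamma (x+1)) by (apply Gamma_pos; lra).
  assert (0 < Gamma (x+1/2)) by (apply Gamma_pos; lra).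
  field. repeat split; lra.
Qed.

Definition Ar (n : nat) := Omega n ^ 2 / (Omega (n - 1) * Omega (n + 1)).

Lemma Ar_eq n : (1 <= n)%nat -> Ar n = Rat (INR n / 2).
Proof.
  intros Hn. unfold Ar, Omega, Rat.
  assert (Hm : INR (n - 1) = INR n - 1) by (rewrite minus_INR by exact Hn; reflexivity).
  assert (Hp : INR (n + 1) = INR n + 1) by (rewrite plus_INR; reflexivity).
  rewrite (Gamma_ext (INR (n-1)/2 + 1) (INR n/2 + 1/2)) by (rewrite Hm; field).
  rewrite (Gamma_ext (INR (n+1)/2 + 1) (INR n/2 + 3/2)) by (rewrite Hp; field).
  set (a := Rpower PI (INR (n-1)/2)). set (b := Rpower PI (INR (n+1)/2)). set (c := Rpower PI (INR n/2)).
  assert (Hab : a * b = c * c).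
  { unfold a, b, c. rewrite <- !Rpower_plus. f_equal. rewrite Hm, Hp. field. }
  assert (0 < a) by (unfold a, Rpower; apply exp_pos).
  assert (0 < b) by (unfold b, Rpower; apply exp_pos).
  assert (0 < c) by (unfold c, Rpower; apply exp_pos).
  assert (HINR : 1 <= INR n) by (apply (le_INR 1); auto).
  assert (0 < Gamma (INR n/2 + 1/2)) by (apply Gamma_pos; lra).
  assert (0 < Gamma (INR n/2 + 3/2)) by (apply Gamma_pos; lra).
  assert (0 < Gamma (INR n/2 + 1)) by (apply Gamma_pos; lra).
  replace ((c / Gamma (INR n / 2 + 1)) ^ 2) with (a * b / Gamma (INR n / 2 + 1) ^ 2)
    by (rewrite Hab; field; lra).
  field. repeat split; lra.
Qed.

Lemma Ar_facts n : (1 <= n)%nat ->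
  1 <= Ar n /\ Ar n * Ar (n+1) = (INR n + 2) / (INR n + 1).
Proof.
  intros Hn.
  assert (H1 : 1 <= INR n) by (apply (le_INR 1); auto).
  rewrite Ar_eq, (Ar_eq (n+1)) by lia. split. apply Rat_ge1; lra.
  rewrite plus_INR. replace ((INR n + INR 1)/2) with (INR n/2 + 1/2) by (simpl; field).
  rewrite Rat_mul by lra. field. lra.
Qed.

Definition L (k : nat) := ln (1 + 1 / INR k).

Lemma lnAr_sum k : (1 <= k)%nat -> ln (Ar k) + ln (Ar (k+1)) = L (k+1).
Proof.
  intros Hk. destruct (Ar_facts k Hk) as [H1 H2]. destruct (Ar_facts (k+1) ltac:(lia)) as [H3 _].
  rewrite <- ln_mult by lra. rewrite H2. unfold L. f_equal. rewrite plus_INR. simpl.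
  assert (0 <= INR k) by apply pos_INR. field. lra.
Qed.

Lemma lnAr_bound k : (1 <= k)%nat -> 0 <= ln (Ar k) <= 1 / INR k.
Proof.
  intros Hk.
  assert (H1 : 1 <= INR k) by (apply (le_INR 1); auto).
  destruct (Ar_facts k Hk) as [A1 _]. destruct (Ar_facts (k+1) ltac:(lia)) as [A2 _].
  assert (0 <= ln (Ar k)) by (rewrite <- ln_1; apply ln_le'; lra).
  assert (0 <= ln (Ar (k+1))) by (rewrite <- ln_1; apply ln_le'; lra).
  assert (HS := lnAr_sum k Hk). unfold L in HS. rewrite plus_INR in HS. change (INR 1) with 1 in HS.
  assert (ln (1 + 1 / (INR k + 1)) <= 1 / (INR k + 1)) by (apply ln1p_le; apply Rdiv_lt_0_compat; lra).
  assert (1 / (INR k + 1) <= 1 / INR k) by (apply Rmult_le_compat_l; [lra| apply Rinv_le_contravar; lra]).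
  lra.
Qed.

Lemma L_bound k : (1 <= k)%nat -> 0 <= L k <= 1 / INR k.
Proof.
  intros Hk. assert (H1 : 1 <= INR k) by (apply (le_INR 1); auto).
  assert (0 < 1 / INR k) by (apply Rdiv_lt_0_compat; lra).
  unfold L. split. rewrite <- ln_1. apply ln_le'; lra. apply ln1p_le; lra.
Qed.

Lemma seq_pos (F E : nat -> R) (N : nat) : (1 <= N)%nat ->
  (forall k, (N <= k)%nat -> F k - F (k+2)%nat = E k) ->
  (forall k, (N <= k)%nat -> E k > 0) ->
  (forall k, (N <= k)%nat -> Rabs (F k) <= 2 / INR k) ->
  forall n, (N <= n)%nat -> F n > 0.
Proof.
  intros HN HFE HE HB.
  assert (Hmono : forall m k, (N <= k)%nat -> F (k + 2*m)%nat <= F k).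
  { induction m as [|m IH]; intros k Hk. rewrite Nat.add_0_r; lra.
    replace (k + 2 * S m)%nat with ((k + 2*m) + 2)%nat by lia.
    assert (H := HFE (k + 2*m)%nat ltac:(lia)). assert (H' := HE (k + 2*m)%nat ltac:(lia)).
    specialize (IH k Hk). lra. }
  intros n Hn.
  assert (HEn := HE n Hn).
  destruct (INR_archimed (E n) 2 HEn) as [m Hm].
  assert (Hm0 : (1 <= m)%nat).
  { destruct m. simpl in Hm. lra. lia. }
  set (D := (n + 2 + 2*m)%nat).
  assert (HD : INR m <= INR D) by (apply le_INR; unfold D; lia).
  assert (Hm1 : 1 <= INR m) by (apply (le_INR 1); auto).
  assert (HBD := HB D ltac:(unfold D; lia)).
  apply Rabs_le_between in HBD.
  assert (HFD : F D <= F (n+2)%nat) by (apply Hmono; lia).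
  assert (2 / INR D < E n).
  { apply Rle_lt_trans with (2 / INR m).
    apply Rmult_le_compat_l. lra. apply Rinv_le_contravar; lra.
    apply Rmult_lt_reg_r with (INR m). lra. unfold Rdiv. rewrite Rmult_assoc, Rinv_l by lra. lra. }
  assert (HH := HFE n Hn). lra.
Qed.

Theorem theorem18 :
  (forall n : nat, (5 <= n)%nat ->
     Rpower (1 + 1 / INR n)
       (1/2 - 1 / (4 * INR n) + 1 / (8 * INR n ^ 2))
     < Omega n ^ 2 / (Omega (n - 1) * Omega (n + 1)))
  /\
  (forall n : nat, (1 <= n)%nat ->
     Omega n ^ 2 / (Omega (n - 1) * Omega (n + 1))
     < Rpower (1 + 1 / INR n)
         (1/2 - 1 / (4 * INR n) + 1 / (8 * INR n ^ 2) + 1 / (48 * INR n ^ 3))).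
Proof.
  assert (HINR2 : forall k, INR (k + 2) = INR k + 2) by (intros; rewrite plus_INR; reflexivity).
  assert (HINR1 : forall k, INR (k + 1) = INR k + 1) by (intros; rewrite plus_INR; reflexivity).
  assert (Hdiff : forall (p : R -> R) k, (1 <= k)%nat ->
    (ln (Ar k) - p (INR k) * L k) - (ln (Ar (k+2)%nat) - p (INR (k+2)%nat) * L (k+2)%nat)
    = L (k+1)%nat - p (INR k) * L k - (1 - p (INR k + 2)) * L (k+2)%nat).
  { intros p k Hk. rewrite HINR2.
    assert (H1 := lnAr_sum k Hk). assert (H2 := lnAr_sum (k+1) ltac:(lia)).
    replace (k+1+1)%nat with (k+2)%nat in H2 by lia. lra. }
  split.
  - intros n Hn.
    set (F := fun k => ln (Ar k) - pl (INR k) * L k).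
    set (E := fun k => L (k+1)%nat - pl (INR k) * L k - (1 - pl (INR k + 2)) * L (k+2)%nat).
    assert (HF : F n > 0).
    { apply (seq_pos F E 5%nat). lia.
      - intros k Hk. apply (Hdiff pl k). lia.
      - intros k Hk. unfold E.
        assert (H5 : 5 <= INR k) by (replace 5 with (INR 5) by (simpl; ring); apply le_INR; lia).
        destruct (L_bounds (INR k)) as [_ B1]. lra.
        destruct (L_bounds (INR k + 1)) as [B2 _]. lra.
        destruct (L_bounds (INR k + 2)) as [_ B3]. lra.
        unfold L. rewrite HINR1, HINR2.
        assert (Hp1 : 0 <= pl (INR k)).
        { unfold pl. assert (1/(4*INR k) <= 1/4). { apply Rmult_le_compat_l. lra. apply Rinv_le_contravar; lra. }
          assert (0 <= 1/(8*INR k^2)) by (apply Rlt_le, Rdiv_lt_0_compat; [lra| apply Rmult_lt_0_compat; [lra| apply pow_lt; lra]]). lra. }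
        assert (Hp2 : 0 <= 1 - pl (INR k + 2)).
        { unfold pl. assert (0 <= 1/(4*(INR k + 2))) by (apply Rlt_le, Rdiv_lt_0_compat; lra).
          assert (1/(8*(INR k+2)^2) <= 1/8). { apply Rmult_le_compat_l. lra. apply Rinv_le_contravar. lra. nra. }
          lra. }
        assert (HE := El_pos (INR k) H5).
        apply Rlt_le_trans with (1 := HE).
        assert (pl (INR k) * ln (1 + 1 / INR k) <= pl (INR k) * HI (INR k)) by (apply Rmult_le_compat_l; lra).
        assert ((1 - pl (INR k + 2)) * ln (1 + 1 / (INR k + 2)) <= (1 - pl (INR k + 2)) * HI (INR k + 2)) by (apply Rmult_le_compat_l; lra).
        lra.
      - intros k Hk. unfold F.
        assert (H1 : 1 <= INR k) by (apply (le_INR 1); lia).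
        destruct (lnAr_bound k ltac:(lia)). destruct (L_bound k ltac:(lia)).
        assert (0 <= pl (INR k) <= 1).
        { unfold pl. assert (1/(4*INR k) <= 1/4). { apply Rmult_le_compat_l. lra. apply Rinv_le_contravar; lra. }
          assert (0 <= 1/(4*INR k)) by (apply Rlt_le, Rdiv_lt_0_compat; lra).
          assert (1/(8*INR k^2) <= 1/8). { apply Rmult_le_compat_l. lra. apply Rinv_le_contravar. lra. nra. }
          assert (0 <= 1/(8*INR k^2)) by (apply Rlt_le, Rdiv_lt_0_compat; [lra| apply Rmult_lt_0_compat; [lra| apply pow_lt; lra]]). lra. }
        assert (0 <= pl (INR k) * L k <= L k) by (split; nra).
        apply Rabs_le_between. unfold Rdiv in *. lra.
      - exact Hn. }
    unfold F in HF. fold (Ar n). unfold Rpower.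
    destruct (Ar_facts n ltac:(lia)) as [A1 _].
    rewrite <- (exp_ln (Ar n)) by lra. apply exp_increasing. unfold L, pl in HF. lra.
  - intros n Hn.
    set (F := fun k => - (ln (Ar k) - pu (INR k) * L k)).
    set (E := fun k => - (L (k+1)%nat - pu (INR k) * L k - (1 - pu (INR k + 2)) * L (k+2)%nat)).
    assert (HF : F n > 0).
    { apply (seq_pos F E 1%nat). lia.
      - intros k Hk. unfold F, E. rewrite <- (Hdiff pu k) by lia. ring.
      - intros k Hk. unfold E.
        assert (H5 : 1 <= INR k) by (apply (le_INR 1); auto).
        destruct (L_bounds (INR k)) as [B1 _]. lra.
        destruct (L_bounds (INR k + 1)) as [_ B2]. lra.
        destruct (L_bounds (INR k + 2)) as [B3 _]. lra.
        unfold L. rewrite HINR1, HINR2.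
        assert (Hp1 : 0 <= pu (INR k)).
        { unfold pu. assert (1/(4*INR k) <= 1/4). { apply Rmult_le_compat_l. lra. apply Rinv_le_contravar; lra. }
          assert (0 <= 1/(8*INR k^2)) by (apply Rlt_le, Rdiv_lt_0_compat; [lra| apply Rmult_lt_0_compat; [lra| apply pow_lt; lra]]).
          assert (0 <= 1/(48*INR k^3)) by (apply Rlt_le, Rdiv_lt_0_compat; [lra| apply Rmult_lt_0_compat; [lra| apply pow_lt; lra]]). lra. }
        assert (Hp2 : 0 <= 1 - pu (INR k + 2)).
        { unfold pu. assert (0 <= 1/(4*(INR k + 2))) by (apply Rlt_le, Rdiv_lt_0_compat; lra).
          assert (1/(8*(INR k+2)^2) <= 1/8). { apply Rmult_le_compat_l. lra. apply Rinv_le_contravar. lra. nra. }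
          assert (1/(48*(INR k+2)^3) <= 1/48). { apply Rmult_le_compat_l. lra. apply Rinv_le_contravar. lra.
             assert (1 <= (INR k + 2)^3) by (rewrite <- (pow1 3); apply pow_incr; lra). lra. }
          lra. }
        assert (HE := Eu_neg (INR k) H5).
        assert (pu (INR k) * LO (INR k) <= pu (INR k) * ln (1 + 1 / INR k)) by (apply Rmult_le_compat_l; lra).
        assert ((1 - pu (INR k + 2)) * LO (INR k + 2) <= (1 - pu (INR k + 2)) * ln (1 + 1 / (INR k + 2))) by (apply Rmult_le_compat_l; lra).
        lra.
      - intros k Hk. unfold F.
        assert (H1 : 1 <= INR k) by (apply (le_INR 1); lia).
        destruct (lnAr_bound k ltac:(lia)). destruct (L_bound k ltac:(lia)).
        assert (0 <= pu (INR k) <= 1).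
        { unfold pu. assert (1/(4*INR k) <= 1/4). { apply Rmult_le_compat_l. lra. apply Rinv_le_contravar; lra. }
          assert (0 <= 1/(4*INR k)) by (apply Rlt_le, Rdiv_lt_0_compat; lra).
          assert (1/(8*INR k^2) <= 1/8). { apply Rmult_le_compat_l. lra. apply Rinv_le_contravar. lra. nra. }
          assert (0 <= 1/(8*INR k^2)) by (apply Rlt_le, Rdiv_lt_0_compat; [lra| apply Rmult_lt_0_compat; [lra| apply pow_lt; lra]]).
          assert (1/(48*INR k^3) <= 1/48). { apply Rmult_le_compat_l. lra. apply Rinv_le_contravar. lra.
             assert (1 <= INR k^3) by (rewrite <- (pow1 3); apply pow_incr; lra). lra. }
          assert (0 <= 1/(48*INR k^3)) by (apply Rlt_le, Rdiv_lt_0_compat; [lra| apply Rmult_lt_0_compat; [lra| apply pow_lt; lra]]). lra. }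
        assert (0 <= pu (INR k) * L k <= L k) by (split; nra).
        rewrite Rabs_Ropp. apply Rabs_le_between. unfold Rdiv in *. lra.
      - exact Hn. }
    unfold F in HF. fold (Ar n). unfold Rpower.
    destruct (Ar_facts n ltac:(lia)) as [A1 _].
    rewrite <- (exp_ln (Ar n)) at 1 by lra. apply exp_increasing. unfold L, pu in HF. lra.
Qed.
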